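(* For $n \ge 2$, the path $P_n$ is $\gamma_{\rm tg}$-critical if and only if $n \pmod 6 \in \{2,4\}$.
   Context: Total domination game on a graph $G$ (without isolated vertices): Dominator and Staller alternately choose vertices; each chosen vertex must be adjacent to at least one vertex not yet totally dominated (i.e., not adjacent to any previously chosen vertex); the game ends when no legal move exists. Dominator minimizes, Staller maximizes the number of moves. $\gamma_{\rm tg}(G)$ is the number of moves when Dominator starts and both play optimally. $G|v$ is the graph with vertex $v$ declared already totally dominated (so moves must totally dominate some vertex not yet totally dominated and other than the declared one), and $\gamma_{\rm tg}(G|v)$ is the optimal number of moves of the Dominator-start game on it. $G$ is $\gamma_{\rm tg}$-critical if $\gamma_{\rm tg}(G|v) < \gamma_{\rm tg}(G)$ for every vertex $v$. *)

(* Defs.v *)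
From mathcomp Require Import all_boot.
Set Implicit Arguments. Unset Strict Implicit. Unset Printing Implicit Defensive.

(* A finite simple graph: vertex type T (finType), adjacency relation e
   (intended symmetric and irreflexive). *)

Section TotalDominationGame.
Variables (T : finType) (e : rel T).

Definition nbhd (v : T) : {set T} := [set u | e v u].

(* D = set of vertices already totally dominated (or declared so).
   v is a legal move iff v is adjacent to a vertex not in D. *)
Definition legal (D : {set T}) (v : T) : bool := [exists u, e v u && (u \notin D)].

(* Optimal number of remaining moves with fuel; dom = true iff Dominator
   is to move. Each legal move strictly enlarges D, so fuel #|T|.+1 is
   enough for the game to end. *)
Fixpoint tg_value (fuel : nat) (D : {set T}) (dom : bool) : nat :=
  match fuel with
  | 0 => 0
  | fuel'.+1 =>
      let vs := [seq (tg_value fuel' (D :|: nbhd v) (~~ dom)).+1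
                | v <- enum T & legal D v] in
      if dom then foldr minn (head 0 vs) vs else foldr maxn 0 vs
  end.

Definition gamma_tg : nat := tg_value #|T|.+1 set0 true.

(* gamma_tg(G|v): v declared already totally dominated *)
Definition gamma_tg_decl (v : T) : nat := tg_value #|T|.+1 [set v] true.

Definition gamma_tg_critical : Prop := forall v : T, gamma_tg_decl v < gamma_tg.

End TotalDominationGame.

Definition path_rel (n : nat) : rel 'I_n :=
  fun i j => (i.+1 == j :> nat) || (j.+1 == i :> nat).
Arguments path_rel n : clear implicits.

(* Main.v *)
Require Import Defs.
From mathcomp Require Import all_boot.
From mathcomp Require Import all_boot zify.
Set Implicit Arguments. Unset Strict Implicit. Unset Printing Implicit Defensive.

Definition wt (c r : bool) (L : nat) : nat :=
  if c || r then (4*L+2) %/ 3 else if L == 1 then 0 else 2 * ((2*L+1) %/ 3).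

Fixpoint G (c : bool) (L : nat) (ro : bool) (bs : seq bool) : nat :=
  match bs with
  | [::] => wt c ro L
  | b :: bs' => if b then wt c true L + G true 0 ro bs' else G c L.+1 ro bs'
  end.

Fixpoint cov (k : nat) (bs : seq bool) : seq bool :=
  match bs with
  | [::] => [::]
  | b :: bs' => match k with
               | 0 => true :: bs'
               | 1 => true :: cov 0 bs'
               | k'.+2 => b :: cov k'.+1 bs'
               end
  end.

Ltac wsolve := rewrite /wt /=;
  repeat match goal with |- context [if ?b then _ else _] => case: (boolP b) => /= ? end;
  lia.

Lemma wt0 c r : wt c r 0 = 0.
Proof. by case: c; case: r. Qed.

Lemma G_nseq c L ro q xs : G c L ro (nseq q false ++ xs) = G c (L + q) ro xs.
Proof. by elim: q L => [|q IH] L /=; rewrite ?addn0 // IH addSnnS. Qed.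

Lemma G_dec (ro : bool) bs : exists p X R, forall c L, G c L ro bs = wt c X (L + p) + R.
Proof.
elim: bs => [|b bs [p [X [R IH]]]].
  by exists 0, ro, 0 => c L; rewrite addn0 addn0.
case: b.
  by exists 0, true, (G true 0 ro bs) => c L; rewrite addn0.
by exists p.+1, X, R => c L /=; rewrite IH addSnnS.
Qed.

Lemma delta (ro : bool) (bs : seq bool) : forall c L k, (k == 0 -> c && (L == 0)) -> k <= size bs ->
  (k == size bs -> ro) -> cov k bs != bs ->
  G c L ro (cov k bs) + 1 <= G c L ro bs <= G c L ro (cov k bs) + 3.
Proof.
elim: bs => [|b bs IH] c L k H0 Hk Hro Hleg; first by move: Hleg => /=.
move: H0 Hk Hro Hleg; case: k => [|[|k]] H0 Hk Hro Hleg.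
- have /andP[Hc /eqP HL] := H0 isT; subst L; move: Hc => /= ->.
  clear Hk Hro; case: b Hleg => /=; first by rewrite eqxx.
  move=> _.
  have [p [X [R E]]] := G_dec ro bs.
  rewrite !E wt0; wsolve.
- case: bs IH Hk Hro Hleg => [|b1 bs] IH Hk Hro Hleg.
  + have Hr : ro by apply: Hro.
    clear Hk Hro; case: b Hleg => /= Hleg; rewrite ?eqxx /= in Hleg; try done; rewrite Hr.
    rewrite wt0; wsolve.
  + have [p [X [R E]]] := G_dec ro bs.
    clear Hk Hro IH; case: b Hleg; case: b1 => /= Hleg; rewrite ?eqxx /= in Hleg; try done;
    rewrite ?E ?wt0 /=; wsolve.
- move: Hk Hro Hleg; case: b => /= Hk Hro Hleg.
  + have := IH true 0 k.+1 (fun _ => isT) Hk Hro.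
    have -> : cov k.+1 bs != bs by apply: contra Hleg => /eqP ->.
    move=> /(_ isT); lia.
  + have := IH c L.+1 k.+1 (fun h => False_ind _ (notF h)) Hk Hro.
    have -> : cov k.+1 bs != bs by apply: contra Hleg => /eqP ->.
    by move=> /(_ isT).
Qed.

Definition okk (c ro : bool) (bs : seq bool) (k : nat) :=
  [&& k <= size bs, (k == 0) ==> c & (k == size bs) ==> ro].

Lemma split_run (bs : seq bool) : exists p rest, bs = nseq p false ++ rest /\
  (rest = [::] \/ exists r, rest = true :: r).
Proof.
elim: bs => [|b bs [p [rest [E H]]]]; first by exists 0, [::]; split => //; left.
case: b; first by exists 0, (true :: bs); split => //; right; exists bs.
by exists p.+1, rest; rewrite E.
Qed.

Lemma cov_shift p k r : cov (p + k.+1) (nseq p false ++ true :: r) = nseq p false ++ true :: cov k r.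
Proof.
elim: p => [|p IH] /=; first by case: k.
by rewrite addnS /= -addnS IH.
Qed.

Lemma covp q rest : cov q.+1 (nseq q.+1 false ++ rest) = nseq q false ++ true :: cov 0 rest.
Proof.
elim: q => [|q IH] //=.
by rewrite -IH.
Qed.

Definition Prop_moves (c ro : bool) (bs : seq bool) :=
  (odd (G c 0 ro bs) ->
     (exists k, okk c ro bs k /\ G c 0 ro bs = G c 0 ro (cov k bs) + 3) /\
     (exists k, okk c ro bs k /\ G c 0 ro bs = G c 0 ro (cov k bs) + 1)) /\
  (0 < G c 0 ro bs ->
     (exists k, okk c ro bs k /\ G c 0 ro (cov k bs) + 2 <= G c 0 ro bs) /\
     (exists k, okk c ro bs k /\ G c 0 ro (cov k bs) < G c 0 ro bs <= G c 0 ro (cov k bs) + 2)).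

Lemma run_moves (c ro : bool) p rest X R :
  (rest = [::] /\ X = ro /\ R = 0) \/ (exists r, rest = true :: r /\ X = true /\ R = G true 0 ro r) ->
  (forall c' L, G c' L ro rest = wt c' X L + R) ->
  let bs := nseq p false ++ rest in
  (odd (wt c X p) ->
     (exists k, okk c ro bs k /\ G c 0 ro bs = G c 0 ro (cov k bs) + 3) /\
     (exists k, okk c ro bs k /\ G c 0 ro bs = G c 0 ro (cov k bs) + 1)) /\
  (0 < wt c X p ->
     (exists k, okk c ro bs k /\ G c 0 ro (cov k bs) + 2 <= G c 0 ro bs) /\
     (exists k, okk c ro bs k /\ G c 0 ro (cov k bs) < G c 0 ro bs <= G c 0 ro (cov k bs) + 2)).
Proof.
move=> Hrest Erest bs.
have Gbs : G c 0 ro bs = wt c X p + R by rewrite /bs G_nseq Erest.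
have kp : forall q, p = q.+1 -> X -> okk c ro bs p /\ G c 0 ro (cov p bs) = wt c true q + R.
  move=> q Hp HX; subst p; split.
    rewrite /okk /bs size_cat size_nseq leq_addr /=.
    case: Hrest => [[-> [HXr _]]|[r [-> _]]]; first by rewrite addn0 eqxx -HXr HX.
    by have -> : (q.+1 == q.+1 + (size r).+1) = false by apply/eqP; lia.
  rewrite /bs covp G_nseq add0n.
  by case: Hrest => [[-> [_ ->]]|[r [-> [_ ->]]]] /=; rewrite ?wt0 ?addn0.
have k0 : forall q, p = q.+1 -> c -> okk c ro bs 0 /\ G c 0 ro (cov 0 bs) = wt true X q + R.
  move=> q Hp Hc; subst p; split.
    by rewrite /okk /bs /= Hc.
  by rewrite /bs /= G_nseq add0n Erest wt0.
have k1 : forall q, p = q.+2 -> okk c ro bs 1 /\ G c 0 ro (cov 1 bs) = wt true X q + R.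
  move=> q Hp; subst p; split.
    by rewrite /okk /bs size_cat size_nseq /=.
  by rewrite /bs /= G_nseq add0n Erest !wt0.
have k2 : forall q, p = q.+3 -> okk c ro bs 2 /\ G c 0 ro (cov 2 bs) = wt c true 1 + wt true X q + R.
  move=> q Hp; subst p; split.
    by rewrite /okk /bs size_cat size_nseq /=.
  by rewrite /bs /= G_nseq add0n Erest !wt0 add0n addnA.
rewrite Gbs; clearbody bs.
case: p Gbs kp k0 k1 k2 => [|[|[|q]]] Gbs kp k0 k1 k2.
- by rewrite wt0.
-
  split; first by case: (c); case: (X).
  move=> Hpos.
  have [HX|HX] := boolP X.
    have [ok E] := kp 0 erefl HX.
    by split; exists 1; rewrite E wt0; split => //; move: Hpos; wsolve.
  have Hc : c by move: Hpos HX; case: (c); case: (X).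
  have [ok E] := k0 0 erefl Hc.
  by split; exists 0; rewrite E wt0; split => //; move: Hpos; wsolve.
-
  have [ok1 E1] := k1 0 erefl.
  have single : c || X -> exists k, okk c ro bs k /\ G c 0 ro (cov k bs) = 2 + R.
    have [HX|HX] := boolP X => H.
      by have [ok E] := kp 1 erefl HX; exists 2; rewrite E; split => //; wsolve.
    have Hc : c by move: H HX; case: (c); case: (X).
    by have [ok E] := k0 1 erefl Hc; exists 0; rewrite E; split => //; wsolve.
  split.
    move=> Hodd; have H : c || X by move: Hodd; case: (c); case: (X).
    split; first by exists 1; rewrite E1 wt0; split => //; move: H; wsolve.
    by have [k [ok E]] := single H; exists k; rewrite E; split => //; move: H; wsolve.
  move=> Hpos; split; first by exists 1; rewrite E1 wt0; split => //; wsolve.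
  have [H|H] := boolP (c || X).
    by have [k [ok E]] := single H; exists k; rewrite E; split => //; move: H; wsolve.
  by exists 1; rewrite E1 wt0; split => //; move: H; wsolve.
-
  have [ok1 E1] := k1 q.+1 erefl.
  have [ok2 E2] := k2 q erefl.
  split.
    move=> Hodd; have H : c || X by move: Hodd; case: (c); case: (X) => //=; wsolve.
    have H2 : q.+3 %% 3 == 2 by move: Hodd; case: (c) H; case: (X) => //= _; wsolve.
    split; first by exists 1; rewrite E1; split => //; move: H H2; wsolve.
    have [HX|HX] := boolP X.
      by have [ok E] := kp q.+2 erefl HX; exists q.+3; rewrite E; split => //; move: H H2 HX; wsolve.
    have Hc : c by move: H HX; case: (c); case: (X).
    by have [ok E] := k0 q.+2 erefl Hc; exists 0; rewrite E; split => //; move: H2 Hc; wsolve.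
  move=> Hpos; split; first by exists 1; rewrite E1; split => //; wsolve.
  by exists 2; rewrite E2; split => //; wsolve.
Qed.

Lemma lift_move c (ro : bool) p r k : okk true ro r k ->
  okk c ro (nseq p false ++ true :: r) (p + k.+1) /\
  G c 0 ro (cov (p + k.+1) (nseq p false ++ true :: r)) = wt c true p + G true 0 ro (cov k r).
Proof.
move=> /and3P[H1 H2 H3]; rewrite cov_shift G_nseq add0n /=; split => //.
rewrite /okk size_cat size_nseq /=; apply/and3P; split.
- by move: H1; lia.
- by rewrite addnS.
- apply/implyP => /eqP E; apply: (implyP H3); apply/eqP; lia.
Qed.

Lemma moves_exist (ro : bool) n : forall bs c, size bs <= n -> Prop_moves c ro bs.
Proof.
elim: n => [|n IH] bs c Hs.
  case: bs Hs => // _; rewrite /Prop_moves /=; split; move: (wt0 c ro) => ->//.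
have [p [rest [Ebs Hrest]]] := split_run bs.
case: Hrest => [Er|[r Er]]; subst bs rest.
  have Erest : forall c' L, G c' L ro [::] = wt c' ro L + 0 by move=> *; rewrite addn0.
  have := run_moves c p (or_introl (conj erefl (conj erefl erefl))) Erest.
  by rewrite /Prop_moves G_nseq add0n /=.
have Erest : forall c' L, G c' L ro (true :: r) = wt c' true L + G true 0 ro r by [].
have := run_moves c p (or_intror (ex_intro _ r (conj erefl (conj erefl erefl)))) Erest.
have Hr : size r <= n by move: Hs; rewrite size_cat /= size_nseq; lia.
have [IHodd IHpos] := IH r true Hr.
rewrite /Prop_moves G_nseq add0n /= => [[Rodd Rpos]].
split.
  move=> Hodd.
  have [Ho|Ho] := boolP (odd (wt c true p)); first by apply: Rodd.
  have Ho2 : odd (G true 0 ro r) by move: Hodd; rewrite oddD (negbTE Ho).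
  have [[k [ok E]] [k' [ok' E']]] := IHodd Ho2.
  have [okl El] := lift_move c p ok; have [okl' El'] := lift_move c p ok'.
  split; [exists (p + k.+1) | exists (p + k'.+1)]; rewrite ?El ?El'; split => //; lia.
move=> Hpos.
have [Hp|Hp] := posnP (wt c true p); last by apply: Rpos; rewrite Hp.
have Hp2 : 0 < G true 0 ro r by move: Hpos; rewrite Hp.
have [[k [ok E]] [k' [ok' E']]] := IHpos Hp2.
have [okl El] := lift_move c p ok; have [okl' El'] := lift_move c p ok'.
split; [exists (p + k.+1) | exists (p + k'.+1)]; rewrite ?El ?El'; split => //; lia.
Qed.

Lemma size_cov k bs : size (cov k bs) = size bs.
Proof. by elim: bs k => [|b bs IH] [|[|k]] //=; rewrite IH. Qed.

Lemma nth_cov k bs i : nth true (cov k bs) i = [|| nth true bs i, i == k | i.+1 == k].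
Proof.
elim: bs k i => [|b bs IH] k i; first by rewrite /= !nth_nil.
case: k => [|[|k]]; case: i => [|i] //=; rewrite ?orbT ?orbF //.
- by rewrite IH /= orbF.
- by rewrite IH.
Qed.

Section PathGame.
Variable n : nat.
Notation e := (path_rel n).

Definition inD (D : {set 'I_n}) (x : nat) : bool := [exists y : 'I_n, (y \in D) && (val y == x)].
Definition mm (c : bool) := if c then n./2 else uphalf n.
Definition cl (c : bool) (D : {set 'I_n}) : seq bool := mkseq (fun i => inD D (c + i.*2)) (mm c).
Definition roc (c : bool) := if c then odd n else ~~ odd n.
Definition Gc (c : bool) D := G c 0 (roc c) (cl c D).
Definition W2 D := Gc false D + Gc true D.
Definition cv (v : 'I_n) := ~~ odd v.
Definition kv (v : 'I_n) := if odd v then (v./2).+1 else v./2.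

Lemma W2E c D : W2 D = Gc c D + Gc (~~ c) D.
Proof. by case: c; rewrite /W2 // addnC. Qed.

Lemma inDU D v x : inD (D :|: nbhd e v) x = inD D x || ((x < n) && ((v.+1 == x) || (x.+1 == v))).
Proof.
apply/existsP/orP.
  move=> [y /andP[Hy /eqP Ey]]; move: Hy; rewrite in_setU inE => /orP[Hy|Hy].
    by left; apply/existsP; exists y; rewrite Hy Ey eqxx.
  by right; rewrite -Ey ltn_ord /=; move: Hy; rewrite /path_rel.
case=> [/existsP[y /andP[Hy Ey]] | /andP[Hx Hr]].
  by exists y; rewrite in_setU Hy Ey.
by exists (Ordinal Hx); rewrite in_setU inE /path_rel /= Hr orbT eqxx.
Qed.

Lemma inD_ord D (y : 'I_n) : inD D y = (y \in D).
Proof.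
apply/existsP/idP => [[z /andP[Hz /eqP Ez]]|Hy]; last by exists y; rewrite Hy eqxx.
by have -> : y = z by apply: val_inj.
Qed.

Lemma size_cl c D : size (cl c D) = mm c.
Proof. by rewrite size_mkseq. Qed.

Lemma mm_lt c i : i < mm c -> c + i.*2 < n.
Proof. by rewrite /mm; case: c => /=; lia. Qed.

Lemma cl_move D v :
  cl (cv v) (D :|: nbhd e v) = cov (kv v) (cl (cv v) D) /\
  cl (~~ cv v) (D :|: nbhd e v) = cl (~~ cv v) D.
Proof.
have Hv := odd_double_half v.
split; apply: (@eq_from_nth _ true); rewrite ?size_cov ?size_cl // => i Hi.
  rewrite nth_cov !nth_mkseq // inDU (mm_lt Hi) /=; congr (_ || _).
  rewrite /cv /kv; case: (odd v) Hv => /= Hv; lia.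
rewrite !nth_mkseq // inDU (mm_lt Hi) /=.
have -> : (v.+1 == ~~ cv v + i.*2) || ((~~ cv v + i.*2).+1 == v) = false.
  by rewrite /cv; case: (odd v) Hv => /= Hv; lia.
by rewrite orbF.
Qed.

Lemma cl_inj D D' : cl false D = cl false D' -> cl true D = cl true D' -> D = D'.
Proof.
move=> E0 E1; apply/setP => y.
have Hy := odd_double_half y.
have Hi : y./2 < mm (odd y) by rewrite /mm; case: (odd y) Hy => /= Hy; have := ltn_ord y; lia.
have : nth true (cl (odd y) D) y./2 = nth true (cl (odd y) D') y./2.
  by case: (odd y) {Hi Hy}; rewrite ?E0 ?E1.
rewrite !nth_mkseq // Hy !inD_ord //.
Qed.

Lemma legalE D v : legal e D v = (cov (kv v) (cl (cv v) D) != cl (cv v) D).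
Proof.
have [E1 E2] := cl_move D v.
have -> : legal e D v = (D :|: nbhd e v != D).
  apply/existsP/idP => [[u /andP[Hu HuD]]|].
    apply/eqP => E; move: HuD; rewrite -E in_setU inE Hu orbT //.
  move=> H; apply/existsP; move: H; apply: contraNT; rewrite negb_exists => /forallP H.
  apply/eqP/setP => u; rewrite in_setU inE; have := H u; case: (e v u); rewrite ?orbT ?orbF //=.
  by rewrite negbK => ->.
rewrite -E1; apply/idP/idP; apply: contra => /eqP H.
  apply/eqP; apply: cl_inj.
    by case Hc: (cv v) H E2 => H E2; rewrite ?H //; move: E2; rewrite Hc.
  by case Hc: (cv v) H E2 => H E2; rewrite ?H //; move: E2; rewrite Hc.
by rewrite H.
Qed.

Lemma okk_v D v : okk (cv v) (roc (cv v)) (cl (cv v) D) (kv v).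
Proof.
rewrite /okk size_cl /mm /roc /cv /kv.
have Hv := odd_double_half v; have Hn := odd_double_half n; have := ltn_ord v.
move=> Hlt; case: (odd v) Hv => /= Hv; case: (odd n) Hn => /= Hn; lia.
Qed.

Lemma v_of_k D c k : okk c (roc c) (cl c D) k -> exists v, cv v = c /\ kv v = k.
Proof.
rewrite /okk size_cl /mm /roc => /and3P[H1 /implyP H2 /implyP H3].
have Hn := odd_double_half n.
have Hlt : (if c then k.*2 else k.*2.-1) < n.
  case: c H1 H2 H3 => H1 H2 H3.
    case: (k =P n./2) => [E|/eqP Ne]; last by lia.
    by have := H3 (introT eqP E); case: (odd n) Hn => /= Hn; lia.
  have Hk : k != 0 by apply/negP => /H2.
  case: (k =P uphalf n) => [E|/eqP Ne]; last by lia.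
  by have := H3 (introT eqP E); case: (odd n) Hn => /= Hn; lia.
exists (Ordinal Hlt); rewrite /cv /kv /=.
case: c H1 H2 H3 Hlt => H1 H2 H3 Hlt /=.
  by rewrite odd_double /= doubleK.
have Hk : k != 0 by apply/negP => /H2.
have -> : odd k.*2.-1 by case: k Hk {H1 H2 H3 Hlt} => // k _; rewrite doubleS /= odd_double.
by split => //; lia.
Qed.

Lemma card_move D v : legal e D v -> #|~: (D :|: nbhd e v)| < #|~: D|.
Proof.
move=> /existsP[u /andP[Hu HuD]]; apply: proper_card; apply/properP; split.
  by apply/subsetP => x; rewrite !inE negb_or => /andP[].
by exists u; rewrite !inE ?Hu ?HuD //= orbT.
Qed.

Lemma W2_move D v : legal e D v -> W2 (D :|: nbhd e v) + 1 <= W2 D <= W2 (D :|: nbhd e v) + 3.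
Proof.
move=> Hl; have [E1 E2] := cl_move D v.
rewrite (W2E (cv v) D) (W2E (cv v) (D :|: nbhd e v)) /Gc E1 E2.
have := @delta (roc (cv v)) (cl (cv v) D) (cv v) 0 (kv v).
have := okk_v D v; rewrite /okk => /and3P[H1 /implyP H2 /implyP H3].
rewrite -legalE; move=> /(_ _ H1 H3 Hl).
have H0 : kv v == 0 -> cv v && (0 == 0) by move=> /H2 ->.
move=> /(_ H0); lia.
Qed.

End PathGame.

Lemma foldr_min_eq (vs : seq nat) t : all (fun x => t <= x) vs -> t \in vs ->
  foldr minn (head 0 vs) vs = t.
Proof.
move=> Hall Hin.
have lo : forall x0, t <= x0 -> t <= foldr minn x0 vs.
  move=> x0 Hx0; elim: vs Hall {Hin} => //= x vs IH /andP[Hx Hs].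
  by rewrite leq_min Hx IH.
have up : forall x0, foldr minn x0 vs <= t.
  move=> x0; elim: vs Hin {Hall lo} => //= x vs IH; rewrite inE => /orP[/eqP ->|H].
    exact: geq_minl.
  exact: leq_trans (geq_minr _ _) (IH H).
apply/eqP; rewrite eqn_leq up lo //.
case: vs Hall Hin {lo up} => //= x vs /andP[]//.
Qed.

Lemma foldr_max_eq (vs : seq nat) t : all (fun x => x <= t) vs -> t \in vs ->
  foldr maxn 0 vs = t.
Proof.
move=> Hall Hin; apply/eqP; rewrite eqn_leq; apply/andP; split.
  elim: vs Hall {Hin} => //= x vs IH /andP[Hx Hs].
  by rewrite geq_max Hx IH.
elim: vs Hin {Hall} => //= x vs IH; rewrite inE => /orP[/eqP ->|H].
  exact: leq_maxl.
exact: leq_trans (IH H) (leq_maxr _ _).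
Qed.

Section PathGame2.
Variable n : nat.
Notation e := (path_rel n).

Lemma move_of_k (D : {set 'I_n}) c k : okk c (roc n c) (cl c D) k ->
  G c 0 (roc n c) (cov k (cl c D)) < Gc c D ->
  exists v, legal e D v /\ W2 (D :|: nbhd e v) + Gc c D = W2 D + G c 0 (roc n c) (cov k (cl c D)).
Proof.
move=> Hok Hlt; have [v [Hc Hk]] := v_of_k Hok.
exists v; have [E1 E2] := cl_move D v.
rewrite legalE; split.
  by apply/negP => /eqP E; move: Hlt; rewrite -Hc -Hk E /Gc ltnn.
rewrite (W2E (cv v) D) (W2E (cv v) (D :|: nbhd e v)) /Gc E1 E2 Hc Hk; lia.
Qed.

Lemma class_moves (D : {set 'I_n}) c : Prop_moves c (roc n c) (cl c D).
Proof. exact: (@moves_exist (roc n c) (size (cl c D)) (cl c D) c (leqnn _)). Qed.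

Lemma value fuel : forall (D : {set 'I_n}) dom, #|~: D| < fuel ->
  tg_value e fuel D dom = if dom then W2 D %/ 2 else (W2 D).+1 %/ 2.
Proof.
elim: fuel => [|f IH] D dom Hc //=.
set vs := [seq _ | _ <- _].
have Evs : vs = [seq (if ~~ dom then W2 (D :|: nbhd e v) %/ 2 else (W2 (D :|: nbhd e v)).+1 %/ 2).+1
                | v <- enum 'I_n & legal e D v].
  rewrite /vs; apply/eq_in_map => v; rewrite mem_filter => /andP[Hl _].
  by rewrite IH //; apply: leq_trans (card_move Hl) _.
have Hmem : forall v, legal e D v -> forall x,
    x = (if ~~ dom then W2 (D :|: nbhd e v) %/ 2 else (W2 (D :|: nbhd e v)).+1 %/ 2).+1 -> x \in vs.
  move=> v Hl x ->; rewrite Evs; apply/mapP; exists v => //.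
  by rewrite mem_filter Hl mem_enum.
have Hall : forall x, x \in vs -> exists v, legal e D v /\
    x = (if ~~ dom then W2 (D :|: nbhd e v) %/ 2 else (W2 (D :|: nbhd e v)).+1 %/ 2).+1.
  move=> x; rewrite Evs => /mapP[v]; rewrite mem_filter => /andP[Hl _] ->.
  by exists v.
clearbody vs.
have [W0|Wpos] := posnP (W2 D).
  have -> : vs = [::].
    case E: vs => [//|x s]; have := Hall x; rewrite E mem_head => /(_ isT) [v [Hl _]].
    by have := W2_move Hl; set W := W2 D; set W1 := W2 _; move=> HH; lia.
  by rewrite W0; case: (dom).
have HW := odd_double_half (W2 D).
have [c Hcls] : exists c, (odd (W2 D) -> odd (Gc c D)) /\ 0 < Gc c D.
  rewrite /W2 in Wpos HW *.
  have [Ho|Ho] := boolP (odd (Gc false D)).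
    exists false; split => //; by case: (Gc false D) Ho.
  have [Ho'|Ho'] := boolP (odd (Gc true D)).
    exists true; split => //; by case: (Gc true D) Ho'.
  case: (posnP (Gc false D)) => [Z|P].
    exists true; split; [by rewrite oddD (negbTE Ho) (negbTE Ho') | by move: Wpos; rewrite Z].
  exists false; split => //; by rewrite oddD (negbTE Ho) (negbTE Ho').
have [Hodd0 Hpos0] := class_moves D c.
have Hodd3 := fun h => Hodd0 (Hcls.1 h).
have [Hpos2 Hpos12] := Hpos0 Hcls.2.
case: dom Evs Hmem Hall => Evs Hmem Hall /=.
- apply: foldr_min_eq.
    apply/allP => x /Hall [v [Hl ->]] /=; have := W2_move Hl; set W := W2 D; set W1 := W2 _; move=> HH; lia.
  case: (boolP (odd (W2 D))) HW => Ho HW.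
    have [k [ok E]] := (Hodd3 Ho).1.
    have [|v [Hl Ev]] := move_of_k ok; first by rewrite /Gc in E *; lia.
    by apply: (Hmem v Hl) => /=; rewrite /Gc in E Ev; set W := W2 D in HW Ev *; set W1 := W2 _ in Ev *; lia.
  have [k [ok E]] := Hpos2.
  have [|v [Hl Ev]] := move_of_k ok; first by rewrite /Gc in E *; lia.
  apply: (Hmem v Hl) => /=; rewrite /Gc in E Ev; have := W2_move Hl; set W := W2 D in HW Ev *; set W1 := W2 _ in Ev *; move=> HH; lia.
- apply: foldr_max_eq.
    apply/allP => x /Hall [v [Hl ->]] /=; have := W2_move Hl; set W := W2 D; set W1 := W2 _; move=> HH; lia.
  case: (boolP (odd (W2 D))) HW => Ho HW.
    have [k [ok E]] := (Hodd3 Ho).2.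
    have [|v [Hl Ev]] := move_of_k ok; first by rewrite /Gc in E *; lia.
    by apply: (Hmem v Hl) => /=; rewrite /Gc in E Ev; set W := W2 D in HW Ev *; set W1 := W2 _ in Ev *; lia.
  have [k [ok E]] := Hpos12.
  have [|v [Hl Ev]] := move_of_k ok; first by rewrite /Gc in E *; lia.
  apply: (Hmem v Hl) => /=; rewrite /Gc in E Ev; have := W2_move Hl; set W := W2 D in HW Ev *; set W1 := W2 _ in Ev *; move=> HH; lia.
Qed.

End PathGame2.

Lemma mkseq_eq1 a m : a < m ->
  mkseq (fun i => i == a) m = nseq a false ++ true :: nseq (m - a.+1) false.
Proof.
move=> Ham; apply: (@eq_from_nth _ false).
  by rewrite size_mkseq size_cat size_nseq /= size_nseq; lia.
move=> i; rewrite size_mkseq => Hi; rewrite nth_mkseq // nth_cat size_nseq.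
case: ltnP => H1; first by rewrite nth_nseq H1; apply/eqP; lia.
case E: (i - a) => [|j] /=; first by apply/eqP; lia.
rewrite nth_nseq; case: ifP => _; apply/eqP; lia.
Qed.

Lemma G_nseq0 c ro m : G c 0 ro (nseq m false) = wt c ro m.
Proof. by rewrite -(cats0 (nseq m false)) G_nseq. Qed.

Lemma G_nseq1 c ro a b : G c 0 ro (nseq a false ++ true :: nseq b false) = wt c true a + wt true ro b.
Proof. by rewrite G_nseq /= G_nseq0. Qed.

Section Final.
Variable n : nat.
Notation e := (path_rel n).

Lemma cl_set0 c : cl c (set0 : {set 'I_n}) = nseq (mm n c) false.
Proof.
apply: (@eq_from_nth _ true); rewrite size_cl ?size_nseq // => i Hi.
rewrite nth_mkseq // nth_nseq Hi; apply/existsP => [[y]]; by rewrite inE.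
Qed.

Lemma inD1 (v : 'I_n) x : inD [set v] x = (x == v).
Proof.
apply/existsP/idP => [[y /andP[]]|/eqP ->]; first by rewrite inE => /eqP -> /eqP ->.
by exists v; rewrite inE !eqxx.
Qed.

Lemma cl_set1 (v : 'I_n) c : cl c [set v] =
  if c == odd v then nseq (v./2) false ++ true :: nseq (mm n c - (v./2).+1) false
  else nseq (mm n c) false.
Proof.
have Hv := odd_double_half v; have Hlt := ltn_ord v.
rewrite /cl; under eq_mkseq => i do rewrite inD1.
case: eqP => [->|Hne].
  rewrite -mkseq_eq1; last by rewrite /mm; case: (odd v) Hv => /= Hv; lia.
  by apply: eq_mkseq => i; apply/eqP/eqP; lia.
apply: (@eq_from_nth _ true); rewrite size_mkseq ?size_nseq // => i Hi.
rewrite nth_mkseq // nth_nseq Hi; apply/eqP.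
by case: c Hne {Hi}; case: (odd v) Hv => /= Hv Hne; lia.
Qed.

Lemma gamma_val : gamma_tg e = W2 (set0 : {set 'I_n}) %/ 2.
Proof. by rewrite /gamma_tg value // setC0 cardsT. Qed.

Lemma decl_val v : gamma_tg_decl e v = W2 [set v] %/ 2.
Proof. by rewrite /gamma_tg_decl value // ltnS max_card. Qed.

End Final.

Unset Implicit Arguments.

Theorem theorem3p1 (n : nat) : 2 <= n ->
  (gamma_tg_critical (path_rel n) <-> (n %% 6 == 2) || (n %% 6 == 4)).
Proof.
move=> Hn; rewrite /gamma_tg_critical gamma_val.
have W0 : W2 (set0 : {set 'I_n}) =
  if odd n then wt false false (n./2).+1 + wt true true n./2
  else wt false true n./2 + wt true false n./2.
  rewrite /W2 /Gc !cl_set0 !G_nseq0 /mm /roc; have Hn2 := odd_double_half n.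
  by case: (odd n) Hn2 => /= Hn2; congr (wt _ _ _ + _); lia.
have Wv : forall v : 'I_n, W2 [set v] =
  let a := v./2 in let h := n./2 in
  if odd n then
    (if odd v then wt true true a + wt true true (h - a.+1) + wt false false h.+1
     else wt false true a + wt true false (h - a) + wt true true h)
  else (if odd v then wt true true a + wt true false (h - a.+1) + wt false true h
        else wt false true a + wt true true (h - a.+1) + wt true false h).
  move=> v; rewrite /W2 /Gc !cl_set1 /=; have Hn2 := odd_double_half n.
  case: (odd v); rewrite /= ?G_nseq1 ?G_nseq0 /mm /roc;
    case: (odd n) Hn2 => /= Hn2;
    [have -> : uphalf n = n./2.+1 by lia | have -> : uphalf n = n./2 by lia
    |have -> : uphalf n = n./2.+1 by lia | have -> : uphalf n = n./2 by lia];
    rewrite ?subSS; lia.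
have Hn2 := odd_double_half n.
split.
  move=> H; apply/contraT => Hbad.
  have [v Hv] : exists v : 'I_n, W2 (set0 : {set 'I_n}) %/ 2 <= W2 [set v] %/ 2.
    rewrite W0; case Hon: (odd n) Hn2 => /= Hn2.
      case: (boolP (n %% 6 == 1)) => H1.
        have H3 : 3 < n by lia.
        by exists (Ordinal H3); rewrite Wv /= Hon; wsolve.
      have H0 : 0 < n by lia.
      by exists (Ordinal H0); rewrite Wv /= Hon; wsolve.
    have H2 : 2 < n by lia.
    by exists (Ordinal H2); rewrite Wv /= Hon; wsolve.
  by have := H v; rewrite decl_val; lia.
move=> Hmod v; rewrite decl_val W0 Wv /=.
have Hv := odd_double_half v; have := ltn_ord v.
case: (odd n) Hn2 => /= Hn2; case: (odd v) Hv => /= Hv Hlt; wsolve.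
Qed.
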